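(* For every strict partition $\lambda$, $q_1(\lambda)=|\lambda|$.
   Context: A strict partition is a finite strictly decreasing sequence of positive integers $\lambda=(\lambda_1>\cdots>\lambda_\ell)$ (the empty sequence is allowed); $|\lambda|=\sum_i\lambda_i$, $\ell(\lambda)=\ell$. The (shifted Young) diagram of $\lambda$ is the set of boxes $(i,j)$ with $1\le i\le\ell(\lambda)$, $i+1\le j\le i+\lambda_i$ (row $i$, column $j$). An outer corner of $\lambda$ is a box of the diagram whose removal leaves the diagram of a strict partition. Let $(\alpha_1,\beta_1),\dots,(\alpha_m,\beta_m)$ be the outer corners with $\alpha_1>\cdots>\alpha_m$, $y_j=\beta_j-\alpha_j$; set $\alpha_{m+1}=0$, $\beta_0=\ell(\lambda)+1$, and $x_i=\beta_i-\alpha_{i+1}$ for $0\le i\le m$. Define $q_1(\lambda)=\sum_{i=0}^m\binom{x_i}{2}-\sum_{i=1}^m\binom{y_i}{2}$. *)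

(* Defs.v *)
From mathcomp Require Import all_boot all_order all_algebra.
From mathcomp Require Import boolp.
Set Implicit Arguments. Unset Strict Implicit. Unset Printing Implicit Defensive.
Import GRing.Theory Num.Theory.

Definition strict_partition (la : seq nat) : bool :=
  sorted gtn la && all (fun x => 0 < x) la.

(* lambda_i for 1 <= i <= size la *)
Definition part (la : seq nat) (i : nat) : nat := nth 0 la i.-1.

(* Shifted diagram: boxes (i,j) with 1 <= i <= l(la), i+1 <= j <= i + la_i. *)
Definition in_diagram (la : seq nat) (b : nat * nat) : bool :=
  [&& 1 <= b.1, b.1 <= size la, b.1 + 1 <= b.2 & b.2 <= b.1 + part la b.1].

Definition diagram (la : seq nat) : seq (nat * nat) :=
  flatten [seq [seq (i, j) | j <- iota (i + 1) (part la i)]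
          | i <- rev (iota 1 (size la))].

Definition outer_corner (la : seq nat) (b : nat * nat) : Prop :=
  in_diagram la b /\
  exists mu : seq nat, strict_partition mu /\
    forall p, in_diagram mu p = in_diagram la p && (p != b).

(* Outer corners (alpha_k, beta_k) listed with decreasing rows. *)
Definition outer_corners (la : seq nat) : seq (nat * nat) :=
  [seq b <- diagram la | `[< outer_corner la b >] ].

Definition binom2 (z : int) : int := ((z * (z - 1)) %/ 2)%Z.

(* q_1(la) = sum_{i=0}^m C(x_i,2) - sum_{i=1}^m C(y_i,2), where
   x_i = beta_i - alpha_{i+1}, beta_0 = l(la)+1, alpha_{m+1} = 0,
   y_j = beta_j - alpha_j. *)
Definition q1 (la : seq nat) : int :=
  let cs := outer_corners la in
  let alphas := [seq Posz b.1 | b <- cs] ++ [:: 0%R] in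
  let betas := Posz (size la).+1 :: [seq Posz b.2 | b <- cs] in
  let xs := [seq (p.1 - p.2)%R | p <- zip betas alphas] in
  let ys := [seq (Posz b.2 - Posz b.1)%R | b <- cs] in
  (\sum_(x <- xs) binom2 x - \sum_(y <- ys) binom2 y)%R.

(* Main.v *)
Require Import Defs.
From mathcomp Require Import all_boot all_order all_algebra.
From mathcomp Require Import boolp zify.
Set Implicit Arguments. Unset Strict Implicit. Unset Printing Implicit Defensive.
Import GRing.Theory Num.Theory.

Definition corner (la : seq nat) (i : nat) : bool :=
  (i == size la) || ((part la i.+1).+1 < part la i).
Definition crs la r := [seq k <- rev (iota 1 r) | corner la k].
Definition S la r := \sum_(0 <= k < r) nth 0 la k.
Fixpoint Fz la (b : int) (s : seq nat) : int :=
  match s with [::] => binom2 b | a :: s' => (binom2 (b - Posz a) + Fz la (Posz (a + part la a)) s')%R end.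
Definition Gz la (s : seq nat) : int := (\sum_(a <- s) binom2 (Posz (part la a)))%R.

Lemma binom2_nat n : binom2 (Posz n) = Posz ('C(n, 2)).
Proof.
rewrite /binom2 bin2 -divn2; case: n => [//|n].
rewrite (_ : (Posz n.+1 - 1)%R = Posz n); last by rewrite -[n.+1]addn1 PoszD GRing.addrK.
by rewrite -PoszM divz_nat.
Qed.

Lemma S_rec la c : 0 < c -> S la c = S la c.-1 + part la c.
Proof. by case: c => // c _; rewrite /S big_nat_recr. Qed.

Definition strictn la :=
  (forall k, 1 <= k -> k < size la -> part la k.+1 < part la k) /\
  (forall k, 1 <= k -> k <= size la -> 0 < part la k).

Lemma strictnP la : strict_partition la -> strictn la.
Proof.
move=> /andP[so al]; split.
- move=> k k1 kn; rewrite /part; case: k k1 kn => // k _ kn /=.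
  by have := (sortedP 0 so) k kn.
- move=> k k1 kn; rewrite /part; case: k k1 kn => // k _ kn /=.
  by apply: (all_nthP 0 al).
Qed.

Lemma crsS la r : crs la r.+1 = if corner la r.+1 then r.+1 :: crs la r else crs la r.
Proof. rewrite /crs -[r.+1]addn1 iotaD rev_cat /= add1n.
by rewrite addn1. Qed.

Lemma block la c' c : strictn la -> c' < c -> c <= size la ->
  (forall k, c' < k -> k < c -> ~~ corner la k) ->
  S la c + 'C(part la c, 2) = S la c' + 'C(c - c' + part la c, 2).
Proof.
move=> [st1 st2] lt le nc.
suff: forall j, j <= c - c' -> S la c + 'C(part la c, 2) = S la (c - j) + 'C(j + part la c, 2)
  /\ (j < c - c' -> part la (c - j) = part la c + j).
  by move=> /(_ (c - c') (leqnn _)) [-> _]; congr (S la _ + _); lia.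
elim=> [|j IH] hj.
  by rewrite subn0 addn0.
have [IH1 IH2] := IH (ltnW hj).
have e1 := IH2 hj.
split.
- rewrite IH1 (@S_rec la (c - j)); last lia.
  have -> : (c - j).-1 = c - j.+1 by lia.
  by rewrite e1 addSn binS bin1; lia.
- move=> hj2.
  have k1 : c' < c - j.+1 by lia.
  have k2 : c - j.+1 < c by lia.
  have := nc _ k1 k2; rewrite /corner negb_or => /andP[ne nlt].
  have := st1 (c - j.+1) ltac:(lia) ltac:(lia).
  have ee : (c - j.+1).+1 = c - j by lia.
  rewrite ee; rewrite ee e1 in nlt; lia.
   
Qed.

Lemma Qlem la r : strictn la -> forall c, r < c -> c <= size la -> corner la c ->
  (forall k, r < k -> k < c -> ~~ corner la k) ->
  Fz la (Posz (c + part la c)) (crs la r) =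
    (Posz (S la c + 'C(part la c, 2)) + Gz la (crs la r))%R.
Proof.
move=> st; elim: r => [|r IH] c lt le cc nc.
  rewrite /crs /= /Gz big_nil GRing.addr0 binom2_nat.
  rewrite (block st lt le nc) subn0 /S big_geq //.
rewrite crsS; case: ifP => cr.
- rewrite /= /Gz big_cons -/(Gz la (crs la r)).
  have k0 : r.+1 <= size la by lia.
  rewrite (IH r.+1 (ltnSn r) k0 cr); last by move=> k h1 h2; exfalso; lia.
  rewrite subzn; last lia.
  rewrite binom2_nat binom2_nat.
  have -> : c + part la c - r.+1 = c - r.+1 + part la c by lia.
  have := block st lt le nc.
  move: (S la c) (S la r.+1) ('C(_, 2)) ('C(_,2)) ('C(_,2)) (Gz _ _) => a b x y z w.
  move=> h; rewrite h; lia.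
- apply: IH => //; first lia.
  move=> k k1 k2; case: (eqVneq k r.+1) => [->|ne]; first by rewrite cr.
  apply: nc => //; lia.
Qed.

Lemma sumnS la : sumn la = S la (size la).
Proof. by rewrite sumnE (big_nth 0). Qed.

Lemma main_abs la : strictn la ->
  (Fz la (Posz (size la).+1) (crs la (size la)) - Gz la (crs la (size la)))%R = Posz (sumn la).
Proof.
move=> st; rewrite sumnS.
case E: (size la) => [|m].
  by rewrite /crs /= /Gz big_nil /S big_geq.
rewrite crsS /corner E eqxx /= -/(corner la).
rewrite /Gz big_cons -/(Gz la (crs la m)).
have cc : corner la m.+1 by rewrite /corner E eqxx.
rewrite (Qlem st (ltnSn m) (eq_leq (esym E)) cc); last by move=> k h1 h2; exfalso; lia.
rewrite subzn // subSnn binom2_nat binom2_nat.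
have -> : ('C(1, 2)) = 0 by [].
move: (S la _) ('C(part la m.+1, 2)) (Gz _ _) => a b c.
lia.
Qed.

Lemma oc_fwd la i j : strict_partition la -> 1 <= i -> i <= size la ->
  i + 1 <= j -> j <= i + part la i -> outer_corner la (i, j) ->
  (j == i + part la i) && corner la i.
Proof.
move=> sl i1 i2 j1 j2 [_ [mu [smu H]]].
have [st1 st2] := strictnP sl.
have [sm1 sm2] := strictnP smu.
have ej : j = i + part la i.
  apply/eqP; rewrite eqn_leq j2 /=; apply/negP => lt.
  have := H (i, j.+1); have := H (i, j); rewrite /in_diagram /= !xpair_eqE.
  lia.
subst j; rewrite eqxx /= /corner; apply/negPn/negP => nc.
have ilt : i < size la by lia.
have h0 := st1 i i1 ilt.
have h3 := st2 i.+1 ltac:(lia) ilt.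
have := H (i.+1, i.+1 + part la i.+1); have := H (i, i + part la i).
rewrite /in_diagram /= !xpair_eqE => h1 h2.
have [hm|hm] := ltnP i (size mu).
  have := sm1 i i1 hm; lia.
lia.
Qed.

Lemma strict_of_part s :
  (forall k, 1 <= k -> k < size s -> part s k.+1 < part s k) ->
  (forall k, 1 <= k -> k <= size s -> 0 < part s k) -> strict_partition s.
Proof.
move=> h1 h2; apply/andP; split.
  apply/(sortedP 0) => k hk; exact: (h1 k.+1).
apply/(all_nthP 0) => k hk; exact: (h2 k.+1).
Qed.

Lemma part_set la i v r : 1 <= i -> 1 <= r ->
  part (set_nth 0 la i.-1 v) r = if r == i then v else part la r.
Proof.
move=> hi hr; rewrite /part nth_set_nth /=.
by case: i r hi hr => [|i] [|r] //= _ _; rewrite eqSS.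
Qed.

Lemma part_take la n r : 1 <= r -> r <= n -> part (take n la) r = part la r.
Proof. by move=> h1 h2; rewrite /part nth_take //; lia. Qed.

Lemma oc_bwd la i : strict_partition la -> 1 <= i -> i <= size la -> corner la i ->
  outer_corner la (i, i + part la i).
Proof.
move=> sl i1 i2 ci.
have [st1 st2] := strictnP sl.
have pi := st2 i i1 i2.
split; first by rewrite /in_diagram /=; lia.
case: (eqVneq (part la i) 1) => [e1|n1].
- have ein : i = size la.
    move: ci; rewrite /corner e1; case: eqP => // _ /=; lia.
  exists (take (size la).-1 la).
  have sz : size (take (size la).-1 la) = (size la).-1 by rewrite size_takel //; lia.
  split.
    apply: strict_of_part; rewrite sz => k k1 k2.
      rewrite !part_take //; try lia. apply: st1; lia.
    rewrite part_take //; try lia. apply: st2; lia.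
  case=> r c; rewrite /in_diagram /= sz xpair_eqE.
  case: (leqP r (size la).-1) => hr.
    case: (posnP r) => [->|r1] //.
    rewrite part_take //; lia.
  case: (eqVneq r i) => [->|]; lia.
- exists (set_nth 0 la i.-1 (part la i).-1).
  have sz : size (set_nth 0 la i.-1 (part la i).-1) = size la.
    by rewrite size_set_nth; lia.
  split.
    apply: strict_of_part; rewrite sz => k k1 k2.
      rewrite !part_set //; case: eqP => e; case: eqP => e'; try lia.
        by subst i; have := st1 k k1 k2; lia.
        by subst k; move: ci; rewrite /corner; lia.
      exact: st1.
    rewrite part_set //; case: eqP => e; try lia. apply: st2 => //.
  case=> r c; rewrite /in_diagram /= sz xpair_eqE.
  case: (posnP r) => [->|r1] //.
  rewrite part_set //; case: eqP => [->|e]; lia.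
Qed.

Lemma flatten_if (T U : Type) (c : pred T) (f : T -> U) s :
  flatten [seq (if c i then [:: f i] else [::]) | i <- s] = [seq f i | i <- s & c i].
Proof. by elim: s => //= x s IH; case: (c x) => /=; rewrite IH. Qed.

Lemma row_filter la i : strict_partition la -> 1 <= i -> i <= size la ->
  [seq b <- [seq (i, j) | j <- iota (i + 1) (part la i)] | `[< outer_corner la b >]]
  = if corner la i then [:: (i, i + part la i)] else [::].
Proof.
move=> sl i1 i2.
have [st1 st2] := strictnP sl.
have pi := st2 i i1 i2.
have e : part la i = (part la i).-1 + 1 by lia.
rewrite [in iota _ _]e iotaD map_cat filter_cat.
rewrite (@eq_in_filter _ _ pred0); last first.
  move=> b /mapP [j]; rewrite mem_iota => /andP[j1 j2] ->.
  apply/asboolPn => oc.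
  have := oc_fwd sl i1 i2 j1 ltac:(lia) oc; lia.
rewrite filter_pred0 /=.
have -> : i + 1 + (part la i).-1 = i + part la i by lia.
case cr: (corner la i).
  by rewrite (asboolT (oc_bwd sl i1 i2 cr)).
rewrite asboolF //= => oc.
have := @oc_fwd la i (i + part la i) sl i1 i2 ltac:(lia) (leqnn _) oc; rewrite cr; lia.
Qed.

Lemma oc_eq la : strict_partition la ->
  outer_corners la = [seq (a, a + part la a) | a <- crs la (size la)].
Proof.
move=> sl; rewrite /outer_corners /diagram filter_flatten -map_comp.
transitivity (flatten [seq (if corner la i then [:: (i, i + part la i)] else [::])
                      | i <- rev (iota 1 (size la))]).
  congr flatten; apply/eq_in_map => i; rewrite mem_rev mem_iota => /andP[h1 h2].
  rewrite /= row_filter //; lia.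
by rewrite flatten_if.
Qed.

Lemma sumF la b s :
  (\sum_(x <- [seq (p.1 - p.2)%R | p <- zip (b :: [seq Posz (a + part la a) | a <- s])
                                 ([seq Posz a | a <- s] ++ [:: 0%R])]) binom2 x)%R = Fz la b s.
Proof.
elim: s b => [|a s IH] b /=.
  by rewrite big_cons big_nil GRing.subr0 GRing.addr0.
by rewrite big_cons IH.
Qed.

Lemma q1E la : strict_partition la ->
  q1 la = (Fz la (Posz (size la).+1) (crs la (size la)) - Gz la (crs la (size la)))%R.
Proof.
move=> sl; rewrite /q1 oc_eq //.
rewrite -!map_comp.
rewrite (sumF la (Posz (size la).+1) (crs la (size la))).
congr (_ - _)%R; rewrite /Gz big_map; apply: eq_bigr => a _ /=.
by rewrite subzn ?leq_addr // addKn.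
Qed.

Theorem lemma4p2 (la : seq nat) :
  strict_partition la -> q1 la = ((sumn la)%:Z)%R.
Proof.
move=> sl; rewrite q1E //; exact: main_abs (strictnP sl).
Qed.
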